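(* Let $R$ be a countable ring and $\mathcal L$ an elementary class of left $R$-modules. A module $M\in\mathcal L$ is strict $\mathcal L$-atomic if and only if every countable subset of $M$ is contained in a countable submodule $N$ of $M$ such that $N$ is locally split in $M$, $N\in\mathcal L$, and $N$ is strict $\mathcal L$-atomic.
   Context: Modules are left $R$-modules. An elementary class is a class of modules axiomatized by (finitary) first-order sentences in the language of left $R$-modules. pp formulas as usual. $(M,\bar m)$ is an $\mathcal L$-free realization of a pp formula $\phi$ if $\bar m\in\phi(M)$ and for every $L\in\mathcal L$ and $\bar c\in\phi(L)$ there is a homomorphism $M\to L$ sending $\bar m$ to $\bar c$; $M$ is strict $\mathcal L$-atomic if every finite tuple of $M$ is an $\mathcal L$-free realization of some pp formula. A submodule $N\subseteq M$ is locally split if for every finite tuple $\bar n$ in $N$ there is a homomorphism $g:M\to N$ with $g(\bar n)=\bar n$. *)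

(* Defs.v *)
From mathcomp Require Import all_boot all_algebra.
Set Implicit Arguments. Unset Strict Implicit. Unset Printing Implicit Defensive.
Import GRing.Theory.
Local Open Scope ring_scope.

Definition countable_type (T : Type) : Prop := exists f : T -> nat, injective f.
Definition countable_set (T : Type) (S : T -> Prop) : Prop :=
  exists f : T -> nat, forall x y, S x -> S y -> f x = f y -> x = y.

Section Modules.
Variable R : pzRingType.

Inductive term : Type :=
  | TVar of nat
  | TZero
  | TAdd of term & term
  | TOpp of term
  | TScale of R & term.

Inductive formula : Type :=
  | FEq of term & term
  | FFalse
  | FNot of formula
  | FAnd of formula & formula
  | FOr of formula & formula
  | FImp of formula & formula
  | FForall of nat & formula
  | FExists of nat & formula.

Fixpoint term_free (x : nat) (t : term) : Prop :=
  match t with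
  | TVar y => x = y
  | TZero => False
  | TAdd t1 t2 => term_free x t1 \/ term_free x t2
  | TOpp t1 => term_free x t1
  | TScale _ t1 => term_free x t1
  end.

Fixpoint formula_free (x : nat) (f : formula) : Prop :=
  match f with
  | FEq t1 t2 => term_free x t1 \/ term_free x t2
  | FFalse => False
  | FNot g => formula_free x g
  | FAnd g h | FOr g h | FImp g h => formula_free x g \/ formula_free x h
  | FForall y g | FExists y g => x <> y /\ formula_free x g
  end.

Definition sentence (f : formula) : Prop := forall x, ~ formula_free x f.

Definition upd (M : Type) (e : nat -> M) (n : nat) (v : M) : nat -> M :=
  fun k => if k == n then v else e k.

Fixpoint eval_term (M : lmodType R) (e : nat -> M) (t : term) : M :=
  match t with
  | TVar y => e y
  | TZero => 0
  | TAdd t1 t2 => eval_term e t1 + eval_term e t2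
  | TOpp t1 => - eval_term e t1
  | TScale r t1 => r *: eval_term e t1
  end.

Fixpoint sat (M : lmodType R) (e : nat -> M) (f : formula) : Prop :=
  match f with
  | FEq t1 t2 => eval_term e t1 = eval_term e t2
  | FFalse => False
  | FNot g => ~ sat e g
  | FAnd g h => sat e g /\ sat e h
  | FOr g h => sat e g \/ sat e h
  | FImp g h => sat e g -> sat e h
  | FForall n g => forall v : M, sat (upd e n v) g
  | FExists n g => exists v : M, sat (upd e n v) g
  end.

(* M |= f for a sentence f (the environment is irrelevant; we use 0) *)
Definition models (M : lmodType R) (f : formula) : Prop := sat (fun _ => (0 : M)) f.

Definition elementary (L : lmodType R -> Prop) : Prop :=
  exists T : formula -> Prop,
    (forall f, T f -> sentence f) /\
    (forall M : lmodType R, L M <-> (forall f, T f -> models M f)).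

Definition is_hom (M N : lmodType R) (f : M -> N) : Prop :=
  (forall x y, f (x + y) = f x + f y) /\ (forall (r : R) x, f (r *: x) = r *: f x).

(* A pp formula phi(x_0..x_{n-1}) :
     exists y_0..y_{m-1}, /\_{e<k}  sum_i A e i x_i + sum_j B e j y_j = 0 *)
Record ppf (n : nat) : Type := PPF {
  pp_m : nat;
  pp_k : nat;
  pp_A : 'I_pp_k -> 'I_n -> R;
  pp_B : 'I_pp_k -> 'I_pp_m -> R }.
Arguments pp_m {n}. Arguments pp_k {n}. Arguments pp_A {n}. Arguments pp_B {n}.

Definition pp_sat (n : nat) (phi : ppf n) (M : lmodType R) (x : 'I_n -> M) : Prop :=
  exists y : 'I_(pp_m phi) -> M,
    forall e : 'I_(pp_k phi),
      \sum_(i < n) pp_A phi e i *: x i + \sum_(j < pp_m phi) pp_B phi e j *: y j = 0.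

Definition free_realization (L : lmodType R -> Prop) (M : lmodType R)
    (n : nat) (m : 'I_n -> M) (phi : ppf n) : Prop :=
  pp_sat phi m /\
  forall (N : lmodType R), L N -> forall c : 'I_n -> N, pp_sat phi c ->
    exists f : M -> N, is_hom f /\ forall i, f (m i) = c i.

Definition strict_atomic (L : lmodType R -> Prop) (M : lmodType R) : Prop :=
  forall (n : nat) (m : 'I_n -> M), exists phi : ppf n, free_realization L m phi.

(* The submodule N of M, given by the injective homomorphism iota : N -> M
   (identifying N with its image), is locally split in M. *)
Definition locally_split (N M : lmodType R) (iota : N -> M) : Prop :=
  forall (n : nat) (v : 'I_n -> N),
    exists g : M -> N, is_hom g /\ forall i, g (iota (v i)) = v i.

End Modules.

(* Main.v *)
Set Warnings "-notation-overridden -ambiguous-paths -redundant-canonical-projection -projection-no-head-constant".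
Require Import Defs.
From HB Require Import structures.
From mathcomp Require Import all_boot all_algebra zify.
From Stdlib Require Import ClassicalEpsilon FunctionalExtensionality Classical.
Set Implicit Arguments. Unset Strict Implicit. Unset Printing Implicit Defensive.
Import GRing.Theory.
Local Open Scope ring_scope.


Section Sub.
Variable R : pzRingType.
Variable M : lmodType R.
Variable P : pred M.
Hypothesis P0 : P 0.
Hypothesis PB : forall x y, P x -> P y -> P (x - y).
Hypothesis PZ : forall (r : R) x, P x -> P (r *: x).

Lemma Pl : submod_closed P.
Proof. split=> // r x y Px Py. rewrite -[y]opprK. apply: PB=>//. apply: PZ.
 done. rewrite -sub0r; apply: PB=>//. Qed.
HB.instance Definition _ := GRing.isSubmodClosed.Build R M P Pl.
HB.instance Definition _ := [SubChoice_isSubLmodule of {x : M | P x} by <:].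
Definition subL : lmodType R := {x : M | P x}.
Lemma subL_hom : is_hom (fun x : subL => sval x).
Proof. done. Qed.
End Sub.

Definition pb (T : Type) (P : T -> Prop) : pred T :=
  fun x => if excluded_middle_informative (P x) then true else false.
Lemma pbP (T : Type) (P : T -> Prop) x : pb P x <-> P x.
Proof. rewrite /pb; case: excluded_middle_informative => //. Qed.

Lemma sub_lmod (R : pzRingType) (M : lmodType R) (P : M -> Prop) :
  P 0 -> (forall x y, P x -> P y -> P (x - y)) -> (forall (r : R) x, P x -> P (r *: x)) ->
  exists (N : lmodType R) (iota : N -> M), is_hom iota /\ injective iota /\
    (forall y, P (iota y)) /\ (forall x, P x -> exists y, iota y = x).
Proof.
move=> H0 HB HZ.
have H0' : pb P 0 by apply/pbP.
have HB' : forall x y, pb P x -> pb P y -> pb P (x - y).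
  by move=> x y /pbP ? /pbP ?; apply/pbP; apply: HB.
have HZ' : forall (r : R) x, pb P x -> pb P (r *: x).
  by move=> r x /pbP ?; apply/pbP; apply: HZ.
exists (subL H0' HB' HZ'), (fun x => sval x); split; first exact: subL_hom.
split; first by move=> x y; apply: val_inj.
split; first by move=> [y Py] /=; apply/pbP.
move=> x Px; have Px2 : pb P x by apply/pbP.
by exists (exist _ x Px2).
Qed.


Section Hom.
Variable R : pzRingType.
Variables M N : lmodType R.
Variable f : M -> N.
Hypothesis hf : is_hom f.

Lemma hom0 : f 0 = 0.
Proof. case: hf => hD _. apply: (@addrI _ (f 0)). by rewrite -hD !addr0. Qed.
Lemma homN x : f (- x) = - f x.
Proof. case: hf => hD _. apply: (@addrI _ (f x)). by rewrite -hD !subrr hom0. Qed.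
Lemma hom_sum I (r : seq I) (F : I -> M) : f (\sum_(i <- r) F i) = \sum_(i <- r) f (F i).
Proof. case: hf => hD _. exact: (big_morph f hD hom0). Qed.
Lemma hom_eval (e : nat -> M) t : eval_term (f \o e) t = f (eval_term e t).
Proof.
case: hf => hD hZ.
elim: t => [y||a IHa b IHb|a IHa|r a IHa] /=; by rewrite ?hom0 ?IHa ?IHb ?hD ?homN ?hZ.
Qed.
Lemma hom_pp n (phi : ppf R n) (x : 'I_n -> M) : pp_sat phi x -> pp_sat phi (f \o x).
Proof.
case: hf => hD hZ.
move=> [y Hy]; exists (f \o y) => e /=.
transitivity (f (\sum_(i < n) pp_A e i *: x i + \sum_(j < pp_m phi) pp_B e j *: y j)); last by rewrite Hy hom0.
rewrite hD !hom_sum; congr (_ + _); apply: eq_bigr => i _; by rewrite hZ.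
Qed.
End Hom.

Lemma hom_comp (R : pzRingType) (A B C : lmodType R) (f : A -> B) (g : B -> C) :
  is_hom f -> is_hom g -> is_hom (g \o f).
Proof. by move=> [f1 f2] [g1 g2]; split=> * /=; rewrite ?f1 ?g1 ?f2 ?g2. Qed.

Lemma dir_back (R : pzRingType) (L : lmodType R -> Prop) (M : lmodType R) :
  (forall S : M -> Prop, countable_set S ->
     exists (N : lmodType R) (iota : N -> M),
       is_hom iota /\ injective iota /\
       (forall x, S x -> exists y, iota y = x) /\
       countable_type N /\
       locally_split iota /\ L N /\ strict_atomic L N) -> strict_atomic L M.
Proof.
move=> H n m.
pose S := fun x => exists i, m i = x.
have cS : countable_set S.
  pose F := fun x => epsilon (inhabits 0%N) (fun k => exists i : 'I_n, nat_of_ord i = k /\ m i = x).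
  exists F; move=> x y [i Hi] [j Hj] EF.
  have [i' [Ei' Mi']] : exists i : 'I_n, nat_of_ord i = F x /\ m i = x.
    by apply: (epsilon_spec (inhabits 0%N) (fun k => exists i : 'I_n, nat_of_ord i = k /\ m i = x)); exists i; exists i.
  have [j' [Ej' Mj']] : exists i : 'I_n, nat_of_ord i = F y /\ m i = y.
    by apply: (epsilon_spec (inhabits 0%N) (fun k => exists i : 'I_n, nat_of_ord i = k /\ m i = y)); exists j; exists j.
  rewrite -Mi' -Mj'; congr m; apply: val_inj; by rewrite /= Ei' Ej'.
have [N [iota [hi [ii [sur [_ [ls [LN saN]]]]]]]] := H S cS.
pose v := fun i => epsilon (inhabits 0) (fun y => iota y = m i).
have Ev : forall i, iota (v i) = m i.
  move=> i; apply: (epsilon_spec (inhabits 0) (fun y => iota y = m i)); apply: sur; by exists i.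
have [phi [pv fr]] := saN n v.
exists phi; split.
  have -> : m = iota \o v by apply: functional_extensionality => i /=; rewrite Ev.
  exact: hom_pp.
move=> N' LN' c pc.
have [f [hf Ef]] := fr N' LN' c pc.
have [g [hg Eg]] := ls n v.
exists (f \o g); split; first exact: hom_comp.
by move=> i /=; rewrite -Ev Eg Ef.
Qed.


Inductive Tm (R : pzRingType) : Type :=
| TLeaf of nat
| TNil
| TCons of Tm R & Tm R
| TSkF of formula R & nat & Tm R
| TSkP (n : nat) of ppf R n & Tm R & nat.

Section Enc.
Variable R : pzRingType.
Variable fR : R -> nat.
Hypothesis fRi : injective fR.
Notation GL := GenTree.Leaf.
Notation GN := GenTree.Node.

Fixpoint enct (t : term R) : GenTree.tree nat := match t with
 | TVar y => GN 0 [:: GL y]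
 | TZero => GN 1 [::]
 | TAdd a b => GN 2 [:: enct a; enct b]
 | TOpp a => GN 3 [:: enct a]
 | TScale r a => GN 4 [:: GL (fR r); enct a] end.

Lemma enct_inj : injective enct.
Proof.
elim=> [y||a IHa b IHb|a IHa|r a IHa] [y'||a' b'|a'|r' a'] //=.
- by case=> ->.
- by case=> /IHa -> /IHb ->.
- by case=> /IHa ->.
- by case=> /fRi -> /IHa ->.
Qed.

Fixpoint encf (f : formula R) : GenTree.tree nat := match f with
 | FEq a b => GN 0 [:: enct a; enct b]
 | FFalse => GN 1 [::]
 | FNot g => GN 2 [:: encf g]
 | FAnd g h => GN 3 [:: encf g; encf h]
 | FOr g h => GN 4 [:: encf g; encf h]
 | FImp g h => GN 5 [:: encf g; encf h]
 | FForall n g => GN 6 [:: GL n; encf g]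
 | FExists n g => GN 7 [:: GL n; encf g] end.

Lemma encf_inj : injective encf.
Proof.
elim=> [a b||g IHg|g IHg h IHh|g IHg h IHh|g IHg h IHh|n g IHg|n g IHg]
  [a' b'||g'|g' h'|g' h'|g' h'|n' g'|n' g'] //=;
 try by case=> /enct_inj -> /enct_inj ->.
- by case=> /IHg ->.
- by case=> /IHg -> /IHh ->.
- by case=> /IHg -> /IHh ->.
- by case=> /IHg -> /IHh ->.
- by case=> -> /IHg ->.
- by case=> -> /IHg ->.
Qed.

Definition encp n (phi : ppf R n) : GenTree.tree nat :=
  GN 0 [:: GL (pp_m phi); GL (pp_k phi);
    GN 0 [seq GL (fR (@pp_A R n phi p.1 p.2)) | p <- enum {: 'I_(pp_k phi) * 'I_n}];
    GN 0 [seq GL (fR (@pp_B R n phi p.1 p.2)) | p <- enum {: 'I_(pp_k phi) * 'I_(pp_m phi)}]].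

Lemma map_enum_inj (T : finType) (F G : T -> R) :
  [seq GL (fR (F p)) | p <- enum T] = [seq GL (fR (G p)) | p <- enum T] -> F = G.
Proof.
move=> /eq_in_map H; apply: functional_extensionality => p.
have := H p; rewrite mem_enum => /(_ isT) [] /fRi //.
Qed.

Lemma encp_inj n : injective (@encp n).
Proof.
case=> m k A B [m' k' A' B']; rewrite /encp /=.
case=> Em Ek; subst m' k' => /map_enum_inj EA /map_enum_inj EB.
have -> : A = A'.
  apply: functional_extensionality => e; apply: functional_extensionality => i.
  exact: (congr1 (fun F => F (e, i)) EA).
have -> : B = B'.
  apply: functional_extensionality => e; apply: functional_extensionality => i.
  exact: (congr1 (fun F => F (e, i)) EB).
done.
Qed.

Fixpoint encT (t : Tm R) : GenTree.tree nat := match t with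
 | TLeaf k => GN 0 [:: GL k]
 | TNil => GN 1 [::]
 | TCons a b => GN 2 [:: encT a; encT b]
 | TSkF g n a => GN 3 [:: encf g; GL n; encT a]
 | TSkP n phi a j => GN 4 [:: GL n; encp phi; encT a; GL j] end.

Lemma encT_inj : injective encT.
Proof.
elim=> [k||a IHa b IHb|g n a IHa|n phi a IHa j] [k'||a' b'|g' n' a'|n' phi' a' j'] //=.
- by case=> ->.
- by case=> /IHa -> /IHb ->.
- by case=> /encf_inj -> -> /IHa ->.
- move=> E.
  have /= En := congr1 (fun t => if t is GN _ [:: GL k; _; _; _] then k else 0%N) E.
  subst n'.
  have /= /(@encp_inj n) -> := congr1 (fun t => if t is GN _ [:: _; p; _; _] then p else GL 0%N) E.
  have /= /IHa -> := congr1 (fun t => if t is GN _ [:: _; _; p; _] then p else GL 0%N) E.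
  by have /= -> := congr1 (fun t => if t is GN _ [:: _; _; _; GL k] then k else 0%N) E.
Qed.
End Enc.


Section Bnd.
Variable R : pzRingType.
Fixpoint tbnd (t : term R) : nat := match t with
 | TVar y => y.+1 | TZero => 0 | TAdd a b => maxn (tbnd a) (tbnd b)
 | TOpp a => tbnd a | TScale _ a => tbnd a end.
Fixpoint fbnd (f : formula R) : nat := match f with
 | FEq a b => maxn (tbnd a) (tbnd b) | FFalse => 0 | FNot g => fbnd g
 | FAnd g h | FOr g h | FImp g h => maxn (fbnd g) (fbnd h)
 | FForall _ g | FExists _ g => fbnd g end.
Variable M : lmodType R.
Lemma eval_agree (t : term R) (e e' : nat -> M) :
  (forall k, (k < tbnd t)%N -> e k = e' k) -> eval_term e t = eval_term e' t.
Proof.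
elim: t => [y||a IHa b IHb|a IHa|r a IHa] /= H.
- by apply: H.
- done.
- rewrite (IHa) ?(IHb) // => k Hk; apply: H; lia.
- by rewrite IHa.
- by rewrite IHa.
Qed.
Lemma sat_agree (g : formula R) : forall (e e' : nat -> M),
  (forall k, (k < fbnd g)%N -> e k = e' k) -> (sat e g <-> sat e' g).
Proof.
elim: g => [a b||g IHg|g IHg h IHh|g IHg h IHh|g IHg h IHh|n g IHg|n g IHg] e e' H /=.
- have -> : eval_term e a = eval_term e' a by apply: eval_agree => k Hk; apply: H; rewrite /=; lia.
  have -> : eval_term e b = eval_term e' b by apply: eval_agree => k Hk; apply: H; rewrite /=; lia.
  done.
- done.
- by rewrite (IHg e e').
- have := IHg e e'; have := IHh e e'. move=> A B; rewrite A ?B; [done| move=> k Hk; apply: H; rewrite /=; lia ..].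
- have := IHg e e'; have := IHh e e'. move=> A B; rewrite A ?B; [done| move=> k Hk; apply: H; rewrite /=; lia ..].
- have := IHg e e'; have := IHh e e'. move=> A B; rewrite A ?B; [done| move=> k Hk; apply: H; rewrite /=; lia ..].
- have Hu : forall v k, (k < fbnd g)%N -> upd e n v k = upd e' n v k.
    by move=> v k Hk; rewrite /upd; case: (k == n) => //; exact: H.
  by split=> Hv v; [apply/(IHg _ _ (Hu v)) | apply/(IHg _ _ (Hu v))].
- have Hu : forall v k, (k < fbnd g)%N -> upd e n v k = upd e' n v k.
    by move=> v k Hk; rewrite /upd; case: (k == n) => //; exact: H.
  by split=> [[v Hv]|[v Hv]]; exists v; [apply/(IHg _ _ (Hu v)) | apply/(IHg _ _ (Hu v))].
Qed.
End Bnd.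


Section Hull.
Variable R : pzRingType.
Variable M : lmodType R.
Variable sE : nat -> M.

Definition envl (l : seq M) : nat -> M := fun k => nth 0 l k.
Definition skf (g : formula R) (n : nat) (l : seq M) : M :=
  epsilon (inhabits 0) (fun v => sat (upd (envl l) n v) g).
Definition tupl n (l : seq M) : 'I_n -> M := fun i => nth 0 l i.
Definition ppcond n (phi : ppf R n) (x : 'I_n -> M) (y : 'I_(pp_m phi) -> M) : Prop :=
  forall e, \sum_(i < n) pp_A e i *: x i + \sum_(j < pp_m phi) pp_B e j *: y j = 0.
Definition skp n (phi : ppf R n) (l : seq M) : 'I_(pp_m phi) -> M :=
  epsilon (inhabits (fun _ => 0)) (@ppcond n phi (@tupl n l)).

Fixpoint ev (t : Tm R) : M * seq M :=
 match t with
 | TLeaf k => (sE k, [::])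
 | TNil => (0, [::])
 | TCons a b => ((ev a).1, (ev a).1 :: (ev b).2)
 | TSkF g n a => (skf g n (ev a).2, [::])
 | TSkP n phi a j => (odflt 0 (omap (@skp n phi (ev a).2) (insub j)), [::])
 end.

Definition hull (x : M) : Prop := exists t, (ev t).1 = x.

Lemma hull_args (l : seq M) : (forall k, (k < size l)%N -> hull (nth 0 l k)) ->
  exists t, (ev t).2 = l.
Proof.
elim: l => [|x l IH] H; first by exists (TNil R).
have [t0 E0] := H 0%N isT.
have [t Et] : exists t, (ev t).2 = l by apply: IH => k Hk; exact: (H k.+1).
by exists (TCons t0 t) => /=; rewrite E0 Et.
Qed.

Lemma hull_TV (g : formula R) (n : nat) (e : nat -> M) :
  (forall k, hull (e k)) -> (exists v, sat (upd e n v) g) ->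
  exists v, hull v /\ sat (upd e n v) g.
Proof.
move=> He Hex.
pose l := [seq e k | k <- iota 0 (fbnd g)].
have Hag : forall v k, (k < fbnd g)%N -> upd (envl l) n v k = upd e n v k.
  move=> v k Hk; rewrite /upd; case: (k == n) => //.
  by rewrite /envl /l (nth_map 0%N) ?size_iota // nth_iota.
have [t Et] : exists t, (ev t).2 = l.
  apply: hull_args => k; rewrite size_map size_iota => Hk.
  by rewrite (nth_map 0%N) ?size_iota // nth_iota.
exists (skf g n l); split; first by exists (TSkF g n t); rewrite /= Et.
apply/(sat_agree (Hag _)).
apply: (epsilon_spec (inhabits 0) (fun v => sat (upd (envl l) n v) g)).
by case: Hex => v Hv; exists v; apply/(sat_agree (Hag _)).
Qed.

Lemma hull_pp n (phi : ppf R n) (x : 'I_n -> M) : (forall i, hull (x i)) ->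
  pp_sat phi x -> exists y, (forall j, hull (y j)) /\ @ppcond n phi x y.
Proof.
move=> Hx Hp.
pose l := [seq x i | i <- enum 'I_n].
have Etl : @tupl n l = x.
  apply: functional_extensionality => i.
  by rewrite /tupl /l (nth_map i) ?size_enum_ord // nth_ord_enum.
have [t Et] : exists t, (ev t).2 = l.
  apply: hull_args => k; rewrite size_map size_enum_ord => Hk.
  by rewrite /l (nth_map (Ordinal Hk)) ?size_enum_ord // nth_enum_ord //.
exists (@skp n phi l); split.
  by move=> j; exists (TSkP phi t j); rewrite /= Et valK.
rewrite -Etl.
apply: (epsilon_spec (inhabits (fun _ => 0)) (@ppcond n phi (@tupl n l))).
by rewrite Etl.
Qed.

Lemma hull0 : hull 0. Proof. by exists (TNil R). Qed.

Lemma hullB x y : hull x -> hull y -> hull (x - y).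
Proof.
move=> Hx Hy.
pose e := fun k : nat => if k == 0%N then x else y.
have He : forall k, hull (e k) by move=> k; rewrite /e; case: (k == 0%N).
have [v [Hv Sv]] := @hull_TV (FEq (TVar R 2) (TAdd (TVar R 0) (TOpp (TVar R 1)))) 2 e He
  (ex_intro _ (x - y) erefl).
by move: Sv; rewrite /= /upd /= => <-.
Qed.

Lemma hullZ (r : R) x : hull x -> hull (r *: x).
Proof.
move=> Hx.
pose e := fun k : nat => x.
have He : forall k, hull (e k) by [].
have [v [Hv Sv]] := @hull_TV (FEq (TVar R 1) (TScale r (TVar R 0))) 1 e He
  (ex_intro _ (r *: x) erefl).
by move: Sv; rewrite /= /upd /= => <-.
Qed.

Lemma hull_count (fR : R -> nat) : injective fR -> countable_set hull.
Proof.
move=> fRi.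
pose ch := fun x => epsilon (inhabits (TNil R)) (fun t => (ev t).1 = x).
exists (fun x => pickle (encT fR (ch x))) => x y Hx Hy /(pcan_inj pickleK_inv) /(encT_inj fRi) E.
have Ex : (ev (ch x)).1 = x by apply: (epsilon_spec (inhabits (TNil R)) (fun t => (ev t).1 = x)).
have Ey : (ev (ch y)).1 = y by apply: (epsilon_spec (inhabits (TNil R)) (fun t => (ev t).1 = y)).
by rewrite -Ex -Ey E.
Qed.

End Hull.


Lemma comp_upd (T U : Type) (f : T -> U) (e : nat -> T) n v :
  f \o upd e n v = upd (f \o e) n (f v).
Proof. apply: functional_extensionality => k; rewrite /upd /=; by case: (k == n). Qed.

Lemma sat_transfer (R : pzRingType) (N M : lmodType R) (iota : N -> M) :
  is_hom iota -> injective iota ->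
  (forall g n (e : nat -> M), (forall k, exists y, iota y = e k) ->
     (exists v, sat (upd e n v) g) -> exists y, sat (upd e n (iota y)) g) ->
  forall g (e : nat -> N), sat e g <-> sat (iota \o e) g.
Proof.
move=> hi ii TV.
elim=> [a b||g IHg|g IHg h IHh|g IHg h IHh|g IHg h IHh|n g IHg|n g IHg] e /=.
- rewrite !hom_eval //; split; [by move=> -> | exact: ii].
- done.
- by rewrite IHg.
- by rewrite IHg IHh.
- by rewrite IHg IHh.
- by rewrite IHg IHh.
- have He : forall k, exists y, iota y = (iota \o e) k by move=> k; exists (e k).
  split=> Hv.
  + move=> w; apply: NNPP => Hn.
    have [y Hy] := TV (FNot g) n _ He (ex_intro _ w Hn).
    have Hy2 : ~ sat (upd (iota \o e) n (iota y)) g := Hy.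
    apply: Hy2; rewrite -comp_upd -IHg; exact: Hv.
  + by move=> v; rewrite IHg comp_upd; exact: Hv.
- have He : forall k, exists y, iota y = (iota \o e) k by move=> k; exists (e k).
  split=> [[v Hv]|[w Hw]].
  + by exists (iota v); rewrite -comp_upd -IHg.
  + have [y Hy] := TV g n _ He (ex_intro _ w Hw).
    by exists y; rewrite IHg comp_upd.
Qed.

Lemma dir_fwd (R : pzRingType) (HR : countable_type R)
    (L : lmodType R -> Prop) (HL : elementary L)
    (M : lmodType R) (HM : L M) :
  strict_atomic L M ->
  (forall S : M -> Prop, countable_set S ->
     exists (N : lmodType R) (iota : N -> M),
       is_hom iota /\ injective iota /\
       (forall x, S x -> exists y, iota y = x) /\
       countable_type N /\
       locally_split iota /\ L N /\ strict_atomic L N).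
Proof.
move=> saM S [fS fSi].
case: HR => fR fRi.
pose sE := fun k => epsilon (inhabits (0 : M)) (fun x => S x /\ fS x = k).
have HS : forall x, S x -> @hull R M sE x.
  move=> x Sx; exists (TLeaf R (fS x)) => /=.
  have [Sx' Ex'] : S (sE (fS x)) /\ fS (sE (fS x)) = fS x.
    by apply: (epsilon_spec (inhabits (0 : M)) (fun y => S y /\ fS y = fS x)); exists x.
  exact: fSi.
have [N [iota [hi [ii [Hin Hout]]]]] :=
  @sub_lmod R M (hull sE) (hull0 sE) (@hullB _ _ sE) (@hullZ _ _ sE).
have [h hinj] := hull_count sE fRi.
have TV : forall g n (e : nat -> M), (forall k, exists y, iota y = e k) ->
     (exists v, sat (upd e n v) g) -> exists y, sat (upd e n (iota y)) g.
  move=> g n e He Hex.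
  have He' : forall k, hull sE (e k) by move=> k; case: (He k) => y <-.
  have [v [Hv Sv]] := hull_TV He' Hex.
  by have [y Ey] := Hout v Hv; exists y; rewrite Ey.
have ST := sat_transfer hi ii TV.
have LN : L N.
  case: HL => T [_ HT]; apply/HT => f Tf.
  have := (proj1 (HT M) HM f Tf).
  rewrite /models ST.
  have -> : iota \o (fun _ : nat => (0 : N)) = (fun _ => 0).
    by apply: functional_extensionality => k /=; rewrite hom0.
  done.
have PP : forall n (phi : ppf R n) (v : 'I_n -> N), pp_sat phi (iota \o v) -> pp_sat phi v.
  move=> n phi v Hp.
  have [y [Hy Cy]] := hull_pp (fun i => Hin (v i)) Hp.
  pose yN := fun j => epsilon (inhabits (0 : N)) (fun z => iota z = y j).
  have EyN : forall j, iota (yN j) = y j.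
    move=> j; apply: (epsilon_spec (inhabits (0 : N)) (fun z => iota z = y j)).
    exact: Hout.
  exists yN => e; apply: ii; rewrite hom0 //.
  have [hD hZ] := hi.
  rewrite hD !(hom_sum hi).
  transitivity (\sum_(i < n) pp_A e i *: iota (v i) + \sum_(j < pp_m phi) pp_B e j *: y j); last exact: (Cy e).
  congr (_ + _); apply: eq_bigr => i _; by rewrite hZ ?EyN.
exists N, iota; split; [done | split; [done | split]].
  by move=> x Sx; apply: Hout; apply: HS.
split; first by exists (fun y => h (iota y)) => a b /hinj Hab; apply: ii; apply: Hab.
have key : forall n (v : 'I_n -> N), exists phi : ppf R n,
    pp_sat phi v /\ free_realization L (iota \o v) phi.
  move=> n v; have [phi [p1 fr]] := saM n (iota \o v).
  by exists phi; split; [apply: PP | split].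
split.
  move=> n v; have [phi [pv [_ fr]]] := key n v.
  have [g [hg Eg]] := fr N LN v pv.
  by exists g.
split; first done.
move=> n v; have [phi [pv [_ fr]]] := key n v.
exists phi; split; first done.
move=> N' LN' c pc; have [f [hf Ef]] := fr N' LN' c pc.
by exists (f \o iota); split; [apply: hom_comp | ].
Qed.

Local Close Scope ring_scope.

Theorem proposition5p4 (R : pzRingType) (HR : countable_type R)
    (L : lmodType R -> Prop) (HL : elementary L)
    (M : lmodType R) (HM : L M) :
  strict_atomic L M <->
  (forall S : M -> Prop, countable_set S ->
     exists (N : lmodType R) (iota : N -> M),
       is_hom iota /\ injective iota /\
       (forall x, S x -> exists y, iota y = x) /\
       countable_type N /\
       locally_split iota /\ L N /\ strict_atomic L N).
Proof.
split; [exact: dir_fwd | exact: dir_back].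
Qed.
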